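(* Let $0<L<\infty$, $\varphi\in(0,1)$, and $\kappa_f,\kappa_s,h_v,c_{p,f},\dot m_c,A_c,R,\mu_f,K_D,K_F,p_{HG}>0$, $T_b>0$, $q_{HG}\in\mathbb R$. Let $(T_f,T_s)$ be the unique solution on $[0,L]$ of $$-\varphi\kappa_fT_f''+c_{p,f}\frac{\dot m_c}{A_c}T_f'=h_v(T_s-T_f),\qquad (1-\varphi)\kappa_sT_s''=h_v(T_s-T_f)\quad\text{on }(0,L),$$ $$T_f(0)=T_s(0)=T_b,\quad (1-\varphi)\kappa_sT_s'(L)=q_{HG}-c_{p,f}\frac{\dot m_c}{A_c}(T_s(L)-T_f(L)),\quad T_f'(L)=\frac{h_vA_c}{c_{p,f}\dot m_c}(T_s(L)-T_f(L)).$$ Assume $q_{HG}>0$ and $$\frac{p_{HG}}{R\,T_f(L)}>\frac{\dot m_c}{\varphi A_c}\frac{1}{\sqrt{R\,T_b}}.$$ Define $$\overline N(y,\rho)=\frac{R\,(c_{p,f}\dot m_c)^{-1}h_vA_c\,\rho^2\,(T_s(y)-T_f(y))+\frac{\dot m_c}{A_c}\Big(\frac{\mu_f}{K_D}+\frac{\dot m_c}{K_FA_c}\Big)}{\varphi^{-2}\big(\frac{\dot m_c}{A_c}\big)^2-R\,T_f(y)\,\rho^2}.$$ Then the backward initial value problem $$\rho_f'(y)=\overline N(y,\rho_f(y))\,\rho_f(y),\ y\in(0,L),\qquad \rho_f(L)=\frac{p_{HG}}{R\,T_f(L)}$$ has a unique solution on $[0,L]$. In particular, this density $\rho_f$ is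 positive and strictly monotonically decreasing.
   Context: $\rho_f$ is the coolant density, $T_f,T_s$ fluid and solid temperatures, $R$ the specific gas constant, $\mu_f$ dynamic viscosity, $K_D$ permeability, $K_F$ Forchheimer coefficient, $p_{HG}$ hot gas pressure at the interface. *)

(* Defs.v *)
From Stdlib Require Import Reals.
From Coquelicot Require Import Coquelicot.
Open Scope R_scope.

Definition inI (L y : R) : Prop := 0 <= y <= L.

Definition cont_within_I (L : R) (f : R -> R) (y : R) : Prop :=
  filterlim f (within (inI L) (locally y)) (locally (f y)).

(* Classical C^2 solutions: Tf, Ts twice differentiable on (0,L), with
   Tf, Ts, Tf', Ts' continuous up to the boundary of [0,L]; the boundary
   values of the derivatives are those of the continuous extensions
   dTf, dTs (i.e. the one-sided derivatives). *)
Definition temp_solution (L phi kf ks hv cpf mc Ac Tb qHG : R)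
  (Tf Ts dTf dTs ddTf ddTs : R -> R) : Prop :=
  (forall y, 0 < y < L ->
     is_derive Tf y (dTf y) /\ is_derive Ts y (dTs y) /\
     is_derive dTf y (ddTf y) /\ is_derive dTs y (ddTs y)) /\
  (forall y, inI L y ->
     cont_within_I L Tf y /\ cont_within_I L Ts y /\
     cont_within_I L dTf y /\ cont_within_I L dTs y) /\
  (forall y, 0 < y < L ->
     - phi * kf * ddTf y + cpf * (mc / Ac) * dTf y = hv * (Ts y - Tf y) /\
     (1 - phi) * ks * ddTs y = hv * (Ts y - Tf y)) /\
  Tf 0 = Tb /\ Ts 0 = Tb /\
  (1 - phi) * ks * dTs L = qHG - cpf * (mc / Ac) * (Ts L - Tf L) /\
  dTf L = hv * Ac / (cpf * mc) * (Ts L - Tf L).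

Definition Nnum (Rg hv cpf mc Ac muf KD KF : R) (Tf Ts : R -> R) (y rho : R) : R :=
  Rg * / (cpf * mc) * hv * Ac * rho ^ 2 * (Ts y - Tf y)
  + mc / Ac * (muf / KD + mc / (KF * Ac)).

Definition Nden (Rg phi mc Ac : R) (Tf : R -> R) (y rho : R) : R :=
  / phi ^ 2 * (mc / Ac) ^ 2 - Rg * Tf y * rho ^ 2.

Definition Nbar (Rg phi hv cpf mc Ac muf KD KF : R) (Tf Ts : R -> R) (y rho : R) : R :=
  Nnum Rg hv cpf mc Ac muf KD KF Tf Ts y rho / Nden Rg phi mc Ac Tf y rho.

(* rho solves the backward IVP on [0,L]: continuous on [0,L], differentiable
   on (0,L) where the ODE holds with a nonvanishing denominator of Nbar
   (so that the right-hand side is defined), and the terminal condition. *)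
Definition density_solution (L Rg phi hv cpf mc Ac muf KD KF pHG : R)
  (Tf Ts : R -> R) (rho : R -> R) : Prop :=
  (forall y, inI L y -> cont_within_I L rho y) /\
  (forall y, 0 < y < L ->
     Nden Rg phi mc Ac Tf y (rho y) <> 0 /\
     is_derive rho y (Nbar Rg phi hv cpf mc Ac muf KD KF Tf Ts y (rho y) * rho y)) /\
  rho L = pHG / (Rg * Tf L).

(* Main.v *)
Require Import Defs.
From Stdlib Require Import Reals.
From Coquelicot Require Import Coquelicot.
Open Scope R_scope.
From Stdlib Require Import Lra Psatz.

Lemma MVT_open (f df : R -> R) (a b : R) : a < b ->
  (forall x, a < x < b -> is_derive f x (df x)) ->
  (forall x, a <= x <= b -> continuity_pt f x) ->
  exists c, a < c < b /\ f b - f a = df c * (b - a).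
Proof.
  intros hab hd hc.
  assert (pr1 : forall c, a < c < b -> derivable_pt f c).
  { intros c hc'. exists (df c). apply (proj1 (is_derive_Reals _ _ _)). now apply hd. }
  assert (pr2 : forall c, a < c < b -> derivable_pt id c).
  { intros c _. apply derivable_pt_id. }
  destruct (MVT f id a b pr1 pr2 hab hc) as [c [P E]].
  { intros; apply derivable_continuous_pt, derivable_pt_id. }
  exists c; split; [exact P|].
  assert (E1 : derive_pt f c (pr1 c P) = df c).
  { apply derive_pt_eq_0. apply (proj1 (is_derive_Reals _ _ _)). now apply hd. }
  assert (E2 : derive_pt id c (pr2 c P) = 1).
  { apply derive_pt_eq_0. apply derivable_pt_lim_id. }
  rewrite E1, E2 in E. unfold id in E. lra.
Qed.

Definition cl (L y : R) : R := Rmax 0 (Rmin L y).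

Lemma cl_in L y : 0 <= L -> inI L (cl L y).
Proof. intros; unfold inI, cl, Rmax, Rmin; repeat destruct Rle_dec; lra. Qed.

Lemma cl_id L y : inI L y -> cl L y = y.
Proof. unfold inI, cl, Rmax, Rmin; intros; repeat destruct Rle_dec; lra. Qed.

Lemma cl_lip L x y : 0 <= L -> Rabs (cl L x - cl L y) <= Rabs (x - y).
Proof.
  intros; unfold cl, Rmax, Rmin; repeat destruct Rle_dec;
  unfold Rabs; repeat destruct Rcase_abs; lra.
Qed.

Lemma ball_R (x e y : R) : ball x e y <-> Rabs (y - x) < e.
Proof. reflexivity. Qed.

Lemma cont_ext L f : 0 <= L -> (forall x, inI L x -> cont_within_I L f x) ->
  forall y, continuous (fun t => f (cl L t)) y.
Proof.
  intros hL hf y.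
  unfold continuous.
  eapply filterlim_comp; [| apply (hf _ (cl_in L y hL))].
  intros P [eps HP].
  exists eps. intros t ht.
  apply HP.
  - rewrite ball_R in *. eapply Rle_lt_trans; [apply cl_lip; lra|]. exact ht.
  - apply cl_in; lra.
Qed.

Lemma cont_ext_pt L f : 0 <= L -> (forall x, inI L x -> cont_within_I L f x) ->
  forall y, continuity_pt (fun t => f (cl L t)) y.
Proof. intros; apply continuity_pt_filterlim; now apply cont_ext. Qed.

Lemma MVT_I (L : R) (f df : R -> R) (a b : R) : 0 <= a -> a < b -> b <= L ->
  (forall x, a < x < b -> is_derive f x (df x)) ->
  (forall x, inI L x -> cont_within_I L f x) ->
  exists c, a < c < b /\ f b - f a = df c * (b - a).
Proof.
  intros ha hab hb hd hc.
  destruct (MVT_open (fun t => f (cl L t)) df a b hab) as [c [Hc E]].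
  - intros x hx. apply is_derive_ext_loc with f; [|now apply hd].
    assert (h : 0 < Rmin (x - 0) (L - x)) by (apply Rmin_glb_lt; lra).
    exists (mkposreal _ h). intros t ht. simpl in ht. rewrite ball_R in ht.
    rewrite cl_id; [reflexivity|]. unfold inI.
    assert (Rmin (x-0) (L-x) <= x - 0) by apply Rmin_l.
    assert (Rmin (x-0) (L-x) <= L - x) by apply Rmin_r.
    unfold Rabs in ht; destruct Rcase_abs in ht; lra.
  - intros; apply cont_ext_pt; lra || auto.
  - exists c; split; [exact Hc|]. rewrite !cl_id in E; unfold inI; lra.
Qed.

Lemma cont_eps (g : R -> R) s : continuity_pt g s ->
  forall eps, 0 < eps -> exists d, 0 < d /\ forall y, Rabs (y - s) < d -> Rabs (g y - g s) < eps.
Proof.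
  intros H eps he.
  destruct (H eps he) as [d [hd H2]].
  exists d; split; [lra|]. intros y hy.
  destruct (Req_dec y s) as [->|ne].
  - rewrite Rminus_diag, Rabs_R0; lra.
  - apply (H2 y). split; [split; [exact I| congruence] | exact hy].
Qed.

Lemma last_zero (g : R -> R) a e : a <= e ->
  (forall x, a <= x <= e -> continuity_pt g x) -> 0 <= g a -> g e < 0 ->
  exists s, a <= s < e /\ g s = 0 /\ forall y, s < y <= e -> g y < 0.
Proof.
  intros hae hc ha he.
  set (E := fun y => a <= y <= e /\ 0 <= g y).
  assert (hb : bound E) by (exists e; intros y [hy _]; lra).
  assert (hne : exists y, E y) by (exists a; split; [lra|exact ha]).
  destruct (completeness E hb hne) as [s [hub hlub]].
  assert (has : a <= s) by (apply hub; split; [lra|exact ha]).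
  assert (hse : s <= e) by (apply hlub; intros y [hy _]; lra).
  assert (gs0 : 0 <= g s).
  { destruct (Rle_lt_dec 0 (g s)) as [h|h]; [exact h|exfalso].
    destruct (cont_eps g s (hc s ltac:(lra)) (- g s) ltac:(lra)) as [d [hd Hd]].
    assert (s <= s - d/2); [|lra].
    apply hlub. intros y [hy gy].
    destruct (Rle_lt_dec y (s - d/2)) as [h1|h1]; [exact h1|exfalso].
    assert (y <= s) by (apply hub; split; assumption).
    assert (Rabs (y - s) < d) by (unfold Rabs; destruct Rcase_abs; lra).
    specialize (Hd y H0). unfold Rabs in Hd; destruct Rcase_abs in Hd; lra. }
  assert (hse' : s < e) by (destruct (Req_dec s e); [subst; lra| lra]).
  assert (neg : forall y, s < y <= e -> g y < 0).
  { intros y hy. destruct (Rlt_le_dec (g y) 0) as [h|h]; [exact h|].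
    assert (y <= s) by (apply hub; split; [lra|exact h]). lra. }
  exists s; split; [lra|split; [|exact neg]].
  destruct (Req_dec (g s) 0) as [h|h]; [exact h|exfalso].
  destruct (cont_eps g s (hc s ltac:(lra)) (g s) ltac:(lra)) as [d [hd Hd]].
  set (y := Rmin (s + d/2) e).
  assert (s < y <= e) by (unfold y, Rmin; destruct Rle_dec; lra).
  assert (Rabs (y - s) < d) by (unfold y, Rmin; destruct Rle_dec; unfold Rabs; destruct Rcase_abs; lra).
  specialize (Hd y H0). specialize (neg y H).
  unfold Rabs in Hd; destruct Rcase_abs in Hd; lra.
Qed.

Lemma cpt_minus f g x : continuity_pt f x -> continuity_pt g x -> continuity_pt (fun t => f t - g t) x.
Proof. intros; now apply (continuity_pt_minus f g x). Qed.
Lemma cpt_plus f g x : continuity_pt f x -> continuity_pt g x -> continuity_pt (fun t => f t + g t) x.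
Proof. intros; now apply (continuity_pt_plus f g x). Qed.
Lemma cpt_mult f g x : continuity_pt f x -> continuity_pt g x -> continuity_pt (fun t => f t * g t) x.
Proof. intros; now apply (continuity_pt_mult f g x). Qed.
Lemma cpt_const c x : continuity_pt (fun _ => c) x.
Proof. apply continuity_pt_const; intros a b; reflexivity. Qed.
Lemma cpt_opp f x : continuity_pt f x -> continuity_pt (fun t => - f t) x.
Proof. intros; now apply (continuity_pt_opp f x). Qed.
Lemma cpt_comp f g x : continuity_pt f x -> continuity_pt g (f x) -> continuity_pt (fun t => g (f t)) x.
Proof. intros; now apply (continuity_pt_comp f g x). Qed.
Lemma cpt_exp x : continuity_pt exp x.
Proof. apply derivable_continuous_pt, derivable_pt_exp. Qed.
Lemma cpt_id x : continuity_pt (fun t => t) x.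
Proof. apply derivable_continuous_pt, derivable_pt_id. Qed.

Lemma deriv_neg_right (w : R -> R) b l : is_derive w b l -> l < 0 -> w b <= 0 ->
  exists e, 0 < e /\ forall y, b < y < b + e -> w y < 0.
Proof.
  intros hd hl hw. apply is_derive_Reals in hd.
  destruct (hd (- l / 2) ltac:(lra)) as [d Hd].
  exists d; split; [apply cond_pos|]. intros y hy.
  specialize (Hd (y - b) ltac:(lra) ltac:(rewrite Rabs_right; lra)).
  replace (b + (y - b)) with y in Hd by ring.
  apply Rabs_def2 in Hd. destruct Hd as [H1 H2].
  assert (hyb : 0 < y - b) by lra.
  assert ((w y - w b) / (y - b) < l / 2) by lra.
  apply (Rmult_lt_compat_r (y - b)) in H; [|lra].
  unfold Rdiv in H. rewrite Rmult_assoc, Rinv_l in H by lra. nra.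
Qed.


Lemma isd_minus f g x df dg : is_derive f x df -> is_derive g x dg ->
  is_derive (fun t => f t - g t) x (df - dg).
Proof. intros; now apply (is_derive_minus f g x df dg). Qed.
Lemma isd_plus f g x df dg : is_derive f x df -> is_derive g x dg ->
  is_derive (fun t => f t + g t) x (df + dg).
Proof. intros; now apply (is_derive_plus f g x df dg). Qed.
Lemma isd_mult f g x df dg : is_derive f x df -> is_derive g x dg ->
  is_derive (fun t => f t * g t) x (df * g x + f x * dg).
Proof. intros; apply (is_derive_mult f g x df dg); auto. intros; apply Rmult_comm. Qed.
Lemma isd_expk k x : is_derive (fun y => exp (k*y)) x (k * exp (k*x)).
Proof. auto_derive; [auto| ring]. Qed.

Lemma cl_cont L x : 0 <= L -> continuity_pt (cl L) x.
Proof.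
  intros hL eps he. exists eps; split; [lra|]. intros y [_ hy].
  simpl in *. unfold R_dist in *. eapply Rle_lt_trans; [apply cl_lip; lra| exact hy].
Qed.

Lemma MVT_E (L : R) (f df : R -> R) (a b : R) : 0 <= a -> a < b -> b <= L ->
  (forall x, a < x < b -> is_derive f x (df x)) ->
  (forall x, a <= x <= b -> continuity_pt (fun t => f (cl L t)) x) ->
  exists c, a < c < b /\ f b - f a = df c * (b - a).
Proof.
  intros ha hab hb hd hc.
  destruct (MVT_open (fun t => f (cl L t)) df a b hab) as [c [Hc E]].
  - intros x hx. apply is_derive_ext_loc with f; [|now apply hd].
    assert (h : 0 < Rmin (x - 0) (L - x)) by (apply Rmin_glb_lt; lra).
    exists (mkposreal _ h). intros t ht. simpl in ht. rewrite ball_R in ht.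
    rewrite cl_id; [reflexivity|]. unfold inI.
    assert (Rmin (x-0) (L-x) <= x - 0) by apply Rmin_l.
    assert (Rmin (x-0) (L-x) <= L - x) by apply Rmin_r.
    unfold Rabs in ht; destruct Rcase_abs in ht; lra.
  - intros; auto.
  - exists c; split; [exact Hc|]. rewrite !cl_id in E; unfold inI; lra.
Qed.

Lemma mono_E L f df a b : 0 <= a -> a <= b -> b <= L ->
  (forall x, a < x < b -> is_derive f x (df x)) -> (forall x, a < x < b -> 0 <= df x) ->
  (forall x, a <= x <= b -> continuity_pt (fun t => f (cl L t)) x) -> f a <= f b.
Proof.
  intros ha hab hb hd hp hc. destruct (Req_dec a b) as [->|ne]; [lra|].
  destruct (MVT_E L f df a b ha ltac:(lra) hb hd hc) as [c [hc1 E]].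
  specialize (hp c hc1). nra.
Qed.

Lemma smono_E L f df a b : 0 <= a -> a < b -> b <= L ->
  (forall x, a < x < b -> is_derive f x (df x)) -> (forall x, a < x < b -> 0 < df x) ->
  (forall x, a <= x <= b -> continuity_pt (fun t => f (cl L t)) x) -> f a < f b.
Proof.
  intros ha hab hb hd hp hc.
  destruct (MVT_E L f df a b ha hab hb hd hc) as [c [hc1 E]].
  specialize (hp c hc1). nra.
Qed.

Lemma antimono_E L f df a b : 0 <= a -> a <= b -> b <= L ->
  (forall x, a < x < b -> is_derive f x (df x)) -> (forall x, a < x < b -> df x <= 0) ->
  (forall x, a <= x <= b -> continuity_pt (fun t => f (cl L t)) x) -> f b <= f a.
Proof.
  intros ha hab hb hd hp hc.
  assert (- f a <= - f b); [|lra].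
  apply (mono_E L (fun t => - f t) (fun t => - df t) a b); auto.
  - intros x hx. apply (is_derive_opp f x (df x)). auto.
  - intros x hx. specialize (hp x hx). lra.
  - intros; apply cpt_opp; auto.
Qed.



Section Temp.
Variables (L phi kf ks hv cpf mc Ac Tb qHG : R) (Tf Ts dTf dTs ddTf ddTs : R -> R).
Hypotheses (hL : 0 < L) (hphi : 0 < phi < 1) (hkf : 0 < kf) (hks : 0 < ks) (hhv : 0 < hv)
  (hcpf : 0 < cpf) (hmc : 0 < mc) (hAc : 0 < Ac) (hq : 0 < qHG)
  (hT : temp_solution L phi kf ks hv cpf mc Ac Tb qHG Tf Ts dTf dTs ddTf ddTs).

Let al := phi * kf.
Let be := (1 - phi) * ks.
Let cc := cpf * (mc / Ac).
Let k := - (cc / al).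

Lemma al_pos : 0 < al. Proof. unfold al; nra. Qed.
Lemma be_pos : 0 < be. Proof. unfold be; nra. Qed.
Lemma cc_pos : 0 < cc. Proof. unfold cc. apply Rmult_lt_0_compat; [lra|]. apply Rdiv_lt_0_compat; lra. Qed.

Lemma hder y : 0 < y < L -> is_derive Tf y (dTf y) /\ is_derive Ts y (dTs y) /\
     is_derive dTf y (ddTf y) /\ is_derive dTs y (ddTs y).
Proof. destruct hT as [h _]; auto. Qed.

Lemma hcont y : inI L y -> cont_within_I L Tf y /\ cont_within_I L Ts y /\
     cont_within_I L dTf y /\ cont_within_I L dTs y.
Proof. destruct hT as [_ [h _]]; auto. Qed.

Lemma heqf y : 0 < y < L -> ddTf y = (cc * dTf y - hv * (Ts y - Tf y)) / al.
Proof.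
  intros hy. destruct hT as [_ [_ [h _]]]. destruct (h y hy) as [h1 _].
  pose proof al_pos. replace (ddTf y) with ((al * ddTf y) / al) by (field; lra).
  f_equal. unfold al, cc in *. lra.
Qed.

Lemma heqs y : 0 < y < L -> ddTs y = hv * (Ts y - Tf y) / be.
Proof.
  intros hy. destruct hT as [_ [_ [h _]]]. destruct (h y hy) as [_ h1].
  pose proof be_pos. replace (ddTs y) with ((be * ddTs y) / be) by (field; lra).
  f_equal. unfold be in *. lra.
Qed.

Lemma h0 : Tf 0 = Ts 0.
Proof. destruct hT as [_ [_ [_ [h1 [h2 _]]]]]; congruence. Qed.

Lemma hLs : be * dTs L = qHG - cc * (Ts L - Tf L).
Proof. destruct hT as [_ [_ [_ [_ [_ [h _]]]]]]; exact h. Qed.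

Lemma hLf : dTf L = hv / cc * (Ts L - Tf L).
Proof.
  destruct hT as [_ [_ [_ [_ [_ [_ h]]]]]]. rewrite h. unfold cc. field. lra.
Qed.

Lemma cTf x : continuity_pt (fun t => Tf (cl L t)) x.
Proof. apply cont_ext_pt; [lra|]. intros; apply hcont; auto. Qed.
Lemma cTs x : continuity_pt (fun t => Ts (cl L t)) x.
Proof. apply cont_ext_pt; [lra|]. intros; apply hcont; auto. Qed.
Lemma cdTf x : continuity_pt (fun t => dTf (cl L t)) x.
Proof. apply cont_ext_pt; [lra|]. intros; apply hcont; auto. Qed.
Lemma cdTs x : continuity_pt (fun t => dTs (cl L t)) x.
Proof. apply cont_ext_pt; [lra|]. intros; apply hcont; auto. Qed.

Let D t := Ts t - Tf t.
Let W t := dTs t - dTf t.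
Let E t := exp (k * t) * dTf t.

Lemma cD x : continuity_pt (fun t => D (cl L t)) x.
Proof. apply cpt_minus; [apply cTs|apply cTf]. Qed.
Lemma cW x : continuity_pt (fun t => W (cl L t)) x.
Proof. apply cpt_minus; [apply cdTs|apply cdTf]. Qed.
Lemma cE x : continuity_pt (fun t => E (cl L t)) x.
Proof.
  apply cpt_mult; [|apply cdTf].
  apply (cpt_comp (fun t => k * cl L t) exp); [|apply cpt_exp].
  apply cpt_mult; [apply cpt_const| apply cl_cont; lra].
Qed.

Lemma dD y : 0 < y < L -> is_derive D y (W y).
Proof. intros hy; destruct (hder y hy) as [h1 [h2 _]]. apply isd_minus; auto. Qed.
Lemma dW y : 0 < y < L -> is_derive W y (ddTs y - ddTf y).
Proof. intros hy; destruct (hder y hy) as [_ [_ [h1 h2]]]. apply isd_minus; auto. Qed.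
Lemma dv y : 0 < y < L -> is_derive dTs y (hv * D y / be).
Proof. intros hy; destruct (hder y hy) as [_ [_ [_ h]]]. unfold D. rewrite <- heqs; auto. Qed.
Lemma dE y : 0 < y < L -> is_derive E y (exp (k * y) * (- hv * D y / al)).
Proof.
  intros hy; destruct (hder y hy) as [_ [_ [h _]]].
  pose proof (isd_mult _ _ y _ _ (isd_expk k y) h) as H2.
  replace (exp (k * y) * (- hv * D y / al)) with (k * exp (k * y) * dTf y + exp (k * y) * ddTf y); [exact H2|].
  rewrite heqf by auto. unfold k, D. pose proof al_pos. field. lra.
Qed.

Lemma u_of_E y : dTf y = E y * exp (- k * y).
Proof.
  unfold E. rewrite Rmult_assoc, (Rmult_comm (dTf y)), <- Rmult_assoc, <- exp_plus.
  replace (k * y + - k * y) with 0 by ring. rewrite exp_0; ring.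
Qed.

Lemma leftward b : 0 < b <= L -> D b <= 0 -> 0 < dTs b -> dTf b < dTs b -> False.
Proof.
  intros hb hDb hv0 huv.
  set (kap := dTs b - Rmax (dTf b) 0).
  assert (hkap : 0 < kap) by (unfold kap, Rmax; destruct Rle_dec; lra).
  destruct (cont_eps _ b (cW b) (W b / 2)) as [d [hd Hd]].
  { unfold W; lra. }
  assert (Wb : W (cl L b) = W b) by (rewrite cl_id; unfold inI; auto; lra).
  rewrite Wb in Hd.
  set (b1 := b - Rmin d b / 2).
  assert (hm1 : 0 < Rmin d b) by (apply Rmin_glb_lt; lra).
  assert (hm2 : Rmin d b <= d) by apply Rmin_l.
  assert (hm3 : Rmin d b <= b) by apply Rmin_r.
  assert (hb1 : 0 < b1 < b) by (unfold b1; lra).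
  assert (eb1 : b1 = b - Rmin d b / 2) by reflexivity. clearbody b1.
  assert (Dneg1 : forall y, b1 <= y < b -> D y < 0).
  { intros y hy.
    assert (D y < D b); [|lra].
    apply (smono_E L D W y b); try lra.
    - intros x hx; apply dD; lra.
    - intros x hx. specialize (Hd x ltac:(rewrite Rabs_left; lra)).
      rewrite cl_id in Hd by (unfold inI; lra).
      apply Rabs_def2 in Hd. lra.
    - intros; apply cD. }
  destruct (last_zero (fun t => D (cl L t)) 0 b1 ltac:(lra) (fun x _ => cD x)) as [s [hs [Ds Hneg]]].
  { rewrite cl_id by (unfold inI; lra). unfold D. rewrite h0. lra. }
  { rewrite cl_id by (unfold inI; lra). apply Dneg1; lra. }
  rewrite cl_id in Ds by (unfold inI; lra).
  assert (Dle : forall y, s < y < b -> D y <= 0).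
  { intros y hy. destruct (Rle_lt_dec y b1).
    - specialize (Hneg y ltac:(lra)). rewrite cl_id in Hneg by (unfold inI; lra). lra.
    - apply Rlt_le, Dneg1; lra. }
  assert (Wge : forall y, s < y < b -> kap <= W y).
  { intros y hy.
    assert (v1 : dTs b <= dTs y).
    { assert (- dTs y <= - dTs b); [|lra].
      apply (mono_E L (fun t => - dTs t) (fun t => - (hv * D t / be)) y b); try lra.
      - intros x hx. apply (is_derive_opp dTs x (hv * D x / be)). apply dv; lra.
      - intros x hx. pose proof be_pos. specialize (Dle x ltac:(lra)).
        assert (hv * D x / be <= 0); [|lra].
        unfold Rdiv. assert (hv * D x <= 0) by nra. pose proof (Rinv_0_lt_compat be H).
        nra.
      - intros x _. apply cpt_opp, cdTs. }
    assert (e1 : E y <= E b).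
    { apply (mono_E L E (fun t => exp (k * t) * (- hv * D t / al)) y b); try lra.
      - intros x hx. apply dE; lra.
      - intros x hx. pose proof al_pos. specialize (Dle x ltac:(lra)).
        apply Rmult_le_pos; [apply Rlt_le, exp_pos|].
        unfold Rdiv. apply Rmult_le_pos; [nra|]. apply Rlt_le, Rinv_0_lt_compat; lra.
      - intros; apply cE. }
    assert (u1 : dTf y <= Rmax (dTf b) 0).
    { rewrite (u_of_E y). destruct (Rle_lt_dec 0 (E b)) as [hE|hE].
      - apply Rle_trans with (E b * exp (- k * b)); [|rewrite <- u_of_E; apply Rmax_l].
        assert (exp (- k * y) <= exp (- k * b)).
        { apply Rlt_le, exp_increasing. unfold k. pose proof al_pos. pose proof cc_pos.
          assert (0 < cc / al) by (apply Rdiv_lt_0_compat; lra). nra. }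
        pose proof (exp_pos (- k * y)). nra.
      - pose proof (exp_pos (- k * y)).
        apply Rle_trans with 0; [|apply Rmax_r]. nra. }
    unfold W, kap in *; lra. }
  destruct (MVT_E L D W s b ltac:(lra) ltac:(lra) ltac:(lra)) as [c [hc Ec]].
  { intros x hx; apply dD; lra. }
  { intros; apply cD. }
  specialize (Wge c hc). nra.
Qed.


Lemma DL_pos : 0 < D L.
Proof.
  destruct (Rlt_le_dec 0 (D L)) as [h|h]; [exact h|exfalso].
  pose proof be_pos. pose proof cc_pos. pose proof hLs. pose proof hLf.
  assert (hvL : 0 < dTs L).
  { assert (0 < be * dTs L) by (unfold D in h; nra). nra. }
  apply (leftward L); [lra|exact h|exact hvL|].
  rewrite hLf. assert (hv / cc * D L <= 0); [|unfold D in *; lra].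
  assert (0 < hv / cc) by (apply Rdiv_lt_0_compat; lra). nra.
Qed.

Lemma EL_pos : 0 < E L.
Proof.
  unfold E. apply Rmult_lt_0_compat; [apply exp_pos|]. rewrite hLf.
  pose proof cc_pos. pose proof DL_pos.
  assert (0 < hv / cc) by (apply Rdiv_lt_0_compat; lra). unfold D in *. nra.
Qed.

Lemma D_nonneg y : inI L y -> 0 <= D y.
Proof.
  intros hy. destruct (Rle_lt_dec 0 (D y)) as [h|h]; [exact h|exfalso].
  pose proof DL_pos.
  destruct (last_zero (fun x => - D (cl L x)) y L ltac:(unfold inI in hy; lra)) as [b [hb [Db Hpos]]].
  { intros; apply cpt_opp, cD. }
  { rewrite cl_id by auto. lra. }
  { rewrite cl_id by (unfold inI; lra). lra. }
  rewrite cl_id in Db by (unfold inI in *; lra).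
  assert (Hp : forall x, b < x <= L -> 0 < D x).
  { intros x hx. specialize (Hpos x hx). rewrite cl_id in Hpos by (unfold inI in *; lra). lra. }
  assert (hy0 : 0 < y).
  { destruct (Req_dec y 0) as [->|ne]; [|unfold inI in hy; lra].
    unfold D in h. rewrite h0 in h. lra. }
  assert (Eb : 0 < E b).
  { apply Rlt_le_trans with (E L); [apply EL_pos|].
    apply (antimono_E L E (fun t => exp (k * t) * (- hv * D t / al)) b L); try lra.
    - intros x hx; apply dE; lra.
    - intros x hx. pose proof al_pos. specialize (Hp x ltac:(lra)).
      pose proof (exp_pos (k * x)).
      assert (- hv * D x / al <= 0); [|nra].
      unfold Rdiv. assert (- hv * D x <= 0) by nra.
      pose proof (Rinv_0_lt_compat al H0). nra.
    - intros; apply cE. }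
  assert (ub : 0 < dTf b) by (rewrite u_of_E; pose proof (exp_pos (- k * b)); nra).
  assert (vb : dTf b < dTs b).
  { destruct (Rlt_le_dec (dTf b) (dTs b)) as [hh|hh]; [exact hh|exfalso].
    assert (hW : is_derive W b (ddTs b - ddTf b)) by (apply dW; lra).
    assert (hneg : ddTs b - ddTf b < 0).
    { rewrite heqs, heqf by lra. assert (Db' : Ts b - Tf b = 0) by (unfold D in Db; lra). rewrite Db'.
      pose proof al_pos. pose proof be_pos. pose proof cc_pos.
      replace (hv * 0 / be - (cc * dTf b - hv * 0) / al) with (- (cc * dTf b / al)) by (field; lra).
      assert (0 < cc * dTf b / al); [apply Rdiv_lt_0_compat; nra|lra]. }
    destruct (deriv_neg_right W b _ hW hneg ltac:(unfold W; lra)) as [e [he He]].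
    set (y1 := b + Rmin e (L - b) / 2).
    assert (hm1 : 0 < Rmin e (L - b)) by (apply Rmin_glb_lt; lra).
    assert (Rmin e (L - b) <= e) by apply Rmin_l.
    assert (Rmin e (L - b) <= L - b) by apply Rmin_r.
    assert (ey1 : y1 = b + Rmin e (L - b) / 2) by reflexivity. clearbody y1.
    destruct (MVT_E L D W b y1 ltac:(lra) ltac:(lra) ltac:(lra)) as [c [hc Ec]].
    { intros x hx; apply dD; lra. }
    { intros; apply cD. }
    specialize (He c ltac:(lra)). specialize (Hp y1 ltac:(lra)). nra. }
  apply (leftward b); lra.
Qed.

Lemma dTf_pos y : inI L y -> 0 < dTf y.
Proof.
  intros hy. rewrite u_of_E. pose proof (exp_pos (- k * y)).
  assert (0 < E y); [|nra].
  apply Rlt_le_trans with (E L); [apply EL_pos|].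
  unfold inI in hy.
  apply (antimono_E L E (fun t => exp (k * t) * (- hv * D t / al)) y L); try lra.
  - intros x hx; apply dE; lra.
  - intros x hx. pose proof al_pos. pose proof (D_nonneg x ltac:(unfold inI; lra)).
    pose proof (exp_pos (k * x)).
    assert (- hv * D x / al <= 0); [|nra].
    unfold Rdiv. assert (- hv * D x <= 0) by nra.
    pose proof (Rinv_0_lt_compat al H0). nra.
  - intros; apply cE.
Qed.

Lemma Tf_ge y : inI L y -> Tb <= Tf y.
Proof.
  intros hy. destruct hT as [_ [_ [_ [h1 _]]]]. rewrite <- h1. unfold inI in hy.
  apply (mono_E L Tf dTf 0 y); try lra.
  - intros x hx; apply hder; lra.
  - intros x hx; apply Rlt_le, dTf_pos; unfold inI; lra.
  - intros; apply cTf.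
Qed.

Lemma temp_facts : forall y, inI L y -> 0 <= Ts y - Tf y /\ Tb <= Tf y.
Proof. intros y hy; split; [apply (D_nonneg y hy)| apply Tf_ge; auto]. Qed.

End Temp.


Lemma RInt_cont_upper (f : R -> R) a : (forall t, continuous f t) ->
  forall y, is_derive (fun b => RInt f a b) y (f y).
Proof.
  intros hf y. apply (is_derive_RInt f (fun b => RInt f a b) a y); [|apply hf].
  apply filter_forall. intros b. apply (@RInt_correct R_CompleteNormedModule). apply (@ex_RInt_continuous R_CompleteNormedModule). intros; apply hf.
Qed.

Lemma geom_zero (a B : R) : (forall n, Rabs a <= B * (/2) ^ n) -> a = 0.
Proof.
  intros H. destruct (Req_dec a 0) as [h|h]; [exact h|exfalso].
  assert (ha : 0 < Rabs a) by (apply Rabs_pos_lt; auto).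
  assert (hB : 0 < B).
  { specialize (H O). simpl in H. lra. }
  destruct (pow_lt_1_zero (/2) ltac:(rewrite Rabs_right; lra) (Rabs a / B) ltac:(apply Rdiv_lt_0_compat; lra)) as [N HN].
  specialize (HN N (le_n _)). specialize (H N).
  rewrite Rabs_right in HN by (apply Rle_ge, pow_le; lra).
  apply (Rmult_lt_compat_l B) in HN; [|lra].
  replace (B * (Rabs a / B)) with (Rabs a) in HN by (field; lra). lra.
Qed.

Lemma deriv_cont (f : R -> R) x l : is_derive f x l -> continuous f x.
Proof. intros H. apply (@ex_derive_continuous R_AbsRing R_NormedModule). exists l; exact H. Qed.

Lemma exp_lin_cont a b t : continuous (fun s => exp (a * (b - s))) t.
Proof. eapply deriv_cont. auto_derive. auto. reflexivity. Qed.

Lemma half_pow_pos n : 0 < (/2)^n.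
Proof. apply pow_lt; lra. Qed.

Lemma half_pow_le m n : (m <= n)%nat -> (/2)^n <= (/2)^m.
Proof.
  intros H. replace n with (m + (n - m))%nat by lia. generalize (n - m)%nat as j.
  induction j as [|j IH]; [rewrite Nat.add_0_r; lra|].
  replace (m + S j)%nat with (S (m + j)) by lia.
  change ((/2)^(S (m+j))) with (/2 * (/2)^(m+j)). pose proof (half_pow_pos (m + j)). lra.
Qed.

Lemma half_pow_small e : 0 < e -> exists N, (/2)^N < e.
Proof.
  intros he. destruct (pow_lt_1_zero (/2) ltac:(rewrite Rabs_right; lra) e he) as [N HN].
  exists N. specialize (HN N (le_n _)). rewrite Rabs_right in HN; [exact HN|].
  apply Rle_ge, Rlt_le, half_pow_pos.
Qed.

Section Picard.
Variables (L zL M K : R) (G : R -> R -> R).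
Hypotheses (hL : 0 < L) (hK : 0 < K)
  (hM : forall t w, Rabs (G t w) <= M)
  (hLip : forall t w1 w2, Rabs (G t w1 - G t w2) <= K * Rabs (w1 - w2))
  (hGc : forall x : R -> R, (forall t, continuous x t) -> forall t, continuous (fun s => G s (x s)) t).

Definition Pic (x : R -> R) : R -> R := fun y => zL + RInt (fun s => G s (x s)) L (cl L y).

Fixpoint it (n : nat) : R -> R := match n with O => fun _ => zL | S n => Pic (it n) end.

Lemma M_nonneg : 0 <= M.
Proof. pose proof (hM 0 0). pose proof (Rabs_pos (G 0 0)). lra. Qed.

Lemma Pic_cont x : (forall t, continuous x t) -> forall t, continuous (Pic x) t.
Proof.
  intros hx t. unfold Pic.
  apply (continuous_plus (fun _ => zL) (fun y => RInt (fun s => G s (x s)) L (cl L y))).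
  { apply continuous_const. }
  apply (continuous_comp (cl L) (fun b => RInt (fun s => G s (x s)) L b)).
  { apply continuity_pt_filterlim, cl_cont; lra. }
  eapply deriv_cont. apply RInt_cont_upper. apply hGc; auto.
Qed.

Lemma it_cont n : forall t, continuous (it n) t.
Proof.
  induction n; simpl.
  - intros; apply continuous_const.
  - apply Pic_cont; auto.
Qed.

Lemma exRI x a b : (forall t, continuous x t) -> ex_RInt (fun s => G s (x s)) a b.
Proof. intros hx; apply (@ex_RInt_continuous R_CompleteNormedModule); intros; apply hGc; auto. Qed.

Lemma RInt_flip x c : (forall t, continuous x t) ->
  RInt (fun s => G s (x s)) L c = - RInt (fun s => G s (x s)) c L.
Proof.
  intros hx. rewrite <- (opp_RInt_swap _ c L); [reflexivity|]. apply exRI; auto.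
Qed.

Lemma Pic_diff x x' y : (forall t, continuous x t) -> (forall t, continuous x' t) ->
  Pic x y - Pic x' y = - RInt (fun s => G s (x s) - G s (x' s)) (cl L y) L.
Proof.
  intros hx hx'. unfold Pic. rewrite !RInt_flip by auto.
  rewrite (RInt_minus (fun s => G s (x s)) (fun s => G s (x' s))) by (apply exRI; auto).
  unfold minus, plus, opp; simpl. ring.
Qed.

Lemma RInt_exp_bound c B : 0 <= c <= L -> 0 <= B ->
  RInt (fun t => K * B * exp (2 * K * (L - t))) c L <= B * exp (2 * K * (L - c)) / 2.
Proof.
  intros hc hB.
  assert (H : is_RInt (fun t => K * B * exp (2 * K * (L - t))) c L
              (minus ((fun t => - (B / 2) * exp (2 * K * (L - t))) L) ((fun t => - (B / 2) * exp (2 * K * (L - t))) c))).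
  { apply (is_RInt_derive (fun t => - (B / 2) * exp (2 * K * (L - t)))).
    - intros x _. auto_derive; [auto|]. replace (L + - x) with (L - x) by ring. field.
    - intros x _. apply (continuous_mult (fun _ => K * B) (fun t => exp (2 * K * (L - t)))).
      + apply continuous_const.
      + apply exp_lin_cont. }
  rewrite (is_RInt_unique _ _ _ _ H). unfold minus, plus, opp; simpl.
  replace (L - L) with 0 by ring. rewrite Rmult_0_r, exp_0. lra.
Qed.

Let Q := exp (2 * K * L).
Let C := L * M.

Lemma it_step n y : Rabs (it (S n) y - it n y) <= C * (/2) ^ n * exp (2 * K * (L - cl L y)).
Proof.
  revert y. induction n as [|n IH]; intros y.
  - simpl. unfold Pic. assert (Ez : forall a b : R, a + b - a = b) by (intros; ring). rewrite Ez.
    pose proof (cl_in L y ltac:(lra)) as hc. unfold inI in hc.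
    rewrite (RInt_flip (fun _ => zL)) by (intros; apply continuous_const).
    rewrite Rabs_Ropp.
    eapply Rle_trans; [apply abs_RInt_le_const; [lra| apply exRI; intros; apply continuous_const| intros; apply hM]|].
    unfold C. pose proof M_nonneg.
    assert (1 <= exp (2 * K * (L - cl L y))).
    { pose proof (exp_ineq1_le (2 * K * (L - cl L y))). nra. }
    assert (0 <= L * M) by nra.
    assert (L * M <= L * M * exp (2 * K * (L - cl L y))) by nra.
    simpl. nra.
  - change (Rabs (Pic (it (S n)) y - Pic (it n) y) <= C * (/2) ^ S n * exp (2 * K * (L - cl L y))).
    rewrite Pic_diff by apply it_cont.
    rewrite Rabs_Ropp.
    pose proof (cl_in L y ltac:(lra)) as hc. unfold inI in hc.
    set (c := cl L y) in *.
    assert (hint : ex_RInt (fun s => G s (it (S n) s) - G s (it n s)) c L).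
    { apply (@ex_RInt_continuous R_CompleteNormedModule). intros z _.
      apply (continuous_minus (fun s => G s (it (S n) s)) (fun s => G s (it n s))); apply hGc, it_cont. }
    eapply Rle_trans; [apply abs_RInt_le; [lra|exact hint]|].
    eapply Rle_trans.
    { apply (RInt_le _ (fun t => K * (C * (/2) ^ n) * exp (2 * K * (L - t)))); [lra| | |].
      - apply (@ex_RInt_continuous R_CompleteNormedModule). intros z _.
        apply (continuous_comp (fun s => G s (it (S n) s) - G s (it n s)) Rabs).
        + apply (continuous_minus (fun s => G s (it (S n) s)) (fun s => G s (it n s))); apply hGc, it_cont.
        + apply continuity_pt_filterlim, Rcontinuity_abs.
      - apply (@ex_RInt_continuous R_CompleteNormedModule). intros z _.
        apply (continuous_mult (fun _ => K * (C * (/2) ^ n)) (fun t => exp (2 * K * (L - t)))).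
        + apply continuous_const.
        + apply exp_lin_cont.
      - intros x hx. eapply Rle_trans; [apply hLip|].
        specialize (IH x). rewrite cl_id in IH by (unfold inI; lra).
        rewrite Rmult_assoc. apply Rmult_le_compat_l; lra. }
    eapply Rle_trans; [apply RInt_exp_bound; [lra|]|].
    { unfold C. apply Rmult_le_pos; [apply Rmult_le_pos; [lra|apply M_nonneg]|apply pow_le; lra]. }
    simpl. lra.
Qed.

Lemma exp_le_Q y : exp (2 * K * (L - cl L y)) <= Q.
Proof.
  unfold Q. pose proof (cl_in L y ltac:(lra)) as hc. unfold inI in hc.
  destruct (Req_dec (cl L y) 0) as [e|e].
  - rewrite e, Rminus_0_r. lra.
  - apply Rlt_le, exp_increasing. nra.
Qed.

Lemma it_step' n y : Rabs (it (S n) y - it n y) <= C * Q * (/2) ^ n.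
Proof.
  eapply Rle_trans; [apply it_step|].
  assert (0 <= C * (/2)^n) by (unfold C; apply Rmult_le_pos; [apply Rmult_le_pos; [lra|apply M_nonneg]|apply pow_le; lra]).
  pose proof (exp_le_Q y). nra.
Qed.

Lemma it_cauchy n j y : Rabs (it (n + j) y - it n y) <= 2 * C * Q * (/2) ^ n * (1 - (/2) ^ j).
Proof.
  induction j as [|j IH].
  - rewrite Nat.add_0_r. simpl. rewrite Rminus_diag, Rabs_R0. lra.
  - replace (n + S j)%nat with (S (n + j)) by lia.
    replace (it (S (n + j)) y - it n y) with
      ((it (S (n + j)) y - it (n + j) y) + (it (n + j) y - it n y)) by ring.
    eapply Rle_trans; [apply Rabs_triang|].
    pose proof (it_step' (n + j) y). rewrite pow_add in H.
    change ((/2)^(S j)) with (/2 * (/2)^j).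
    assert (Eq : 2 * C * Q * (/ 2) ^ n * (1 - / 2 * (/ 2) ^ j) =
      C * Q * ((/ 2) ^ n * (/ 2) ^ j) + 2 * C * Q * (/ 2) ^ n * (1 - (/ 2) ^ j)).
    { set (a := (/2)^n). set (b := (/2)^j). field. }
    rewrite Eq. lra.
Qed.

Let B0 := 2 * C * Q.

Lemma B0_nonneg : 0 <= B0.
Proof.
  unfold B0, C, Q. pose proof M_nonneg. pose proof (exp_pos (2 * K * L)).
  assert (0 <= L * M) by nra. nra.
Qed.

Lemma it_cauchy' n m y : (n <= m)%nat -> Rabs (it m y - it n y) <= B0 * (/2) ^ n.
Proof.
  intros H. replace m with (n + (m - n))%nat by lia.
  eapply Rle_trans; [apply it_cauchy|].
  pose proof (half_pow_pos (m - n)). pose proof (half_pow_pos n). pose proof B0_nonneg.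
  unfold B0 in *. assert (0 <= 2 * C * Q * (/2)^n) by nra. nra.
Qed.

Definition zlim (y : R) : R := Lim_seq (fun n => it n y).

Lemma it_cv y : is_lim_seq (fun n => it n y) (zlim y).
Proof.
  apply Lim_seq_correct'. apply ex_lim_seq_cauchy_corr. intros eps.
  pose proof B0_nonneg.
  destruct (half_pow_small (eps / (B0 + 1))) as [N HN].
  { apply Rdiv_lt_0_compat; [apply cond_pos|lra]. }
  exists N. intros n m hn hm.
  assert (Bn : B0 * (/2)^N < eps).
  { apply (Rmult_lt_compat_l (B0 + 1)) in HN; [|lra].
    replace ((B0 + 1) * (eps / (B0 + 1))) with (pos eps) in HN by (field; lra).
    pose proof (half_pow_pos N). nra. }
  destruct (Nat.le_ge_cases n m) as [h|h].
  - rewrite Rabs_minus_sym. eapply Rle_lt_trans; [apply it_cauchy'; exact h|].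
    pose proof (half_pow_le N n hn). nra.
  - eapply Rle_lt_trans; [apply it_cauchy'; exact h|].
    pose proof (half_pow_le N m hm). nra.
Qed.

Lemma zlim_unif n y : Rabs (zlim y - it n y) <= B0 * (/2) ^ n.
Proof.
  destruct (Rle_lt_dec (Rabs (zlim y - it n y)) (B0 * (/2) ^ n)) as [h|h]; [exact h|exfalso].
  pose proof (it_cv y) as Hc. apply is_lim_seq_Reals in Hc.
  destruct (Hc (Rabs (zlim y - it n y) - B0 * (/2) ^ n) ltac:(lra)) as [N HN].
  specialize (HN (Nat.max N n) (Nat.le_max_l _ _)). unfold R_dist in HN.
  pose proof (it_cauchy' n (Nat.max N n) y (Nat.le_max_r _ _)).
  assert (Rabs (zlim y - it n y) <= Rabs (it (Nat.max N n) y - zlim y) + Rabs (it (Nat.max N n) y - it n y)).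
  { replace (zlim y - it n y) with (- (it (Nat.max N n) y - zlim y) + (it (Nat.max N n) y - it n y)) by ring.
    eapply Rle_trans; [apply Rabs_triang|]. rewrite Rabs_Ropp. lra. }
  lra.
Qed.

Lemma zlim_cont t : continuous zlim t.
Proof.
  apply continuity_pt_filterlim.
  intros eps he.
  pose proof B0_nonneg.
  destruct (half_pow_small (eps / 3 / (B0 + 1))) as [N HN].
  { apply Rdiv_lt_0_compat; lra. }
  assert (Bn : B0 * (/2)^N < eps / 3).
  { apply (Rmult_lt_compat_l (B0 + 1)) in HN; [|lra].
    replace ((B0 + 1) * (eps / 3 / (B0 + 1))) with (eps / 3) in HN by (field; lra).
    pose proof (half_pow_pos N). nra. }
  assert (hc : continuity_pt (it N) t) by (apply continuity_pt_filterlim, it_cont).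
  destruct (cont_eps (it N) t hc (eps / 3) ltac:(lra)) as [d [hd Hd]].
  exists d; split; [exact hd|].
  intros x [_ hx]. simpl in hx. unfold R_dist in hx. simpl. unfold R_dist.
  specialize (Hd x hx).
  pose proof (zlim_unif N x). pose proof (zlim_unif N t).
  replace (zlim x - zlim t) with ((zlim x - it N x) + (it N x - it N t) - (zlim t - it N t)) by ring.
  eapply Rle_lt_trans; [apply Rabs_triang|].
  eapply Rle_lt_trans; [apply Rplus_le_compat_l; rewrite Rabs_Ropp; apply Rle_refl|].
  pose proof (Rabs_triang (zlim x - it N x) (it N x - it N t)). lra.
Qed.

Lemma zlim_fix y : zlim y = Pic zlim y.
Proof.
  apply Rminus_diag_uniq.
  apply (geom_zero _ (B0 + L * K * B0)). intros n.
  assert (h1 : Rabs (zlim y - it (S n) y) <= B0 * (/2)^n).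
  { eapply Rle_trans; [apply zlim_unif|]. pose proof (half_pow_le n (S n) ltac:(lia)). pose proof B0_nonneg. nra. }
  assert (h2 : Rabs (Pic (it n) y - Pic zlim y) <= L * K * B0 * (/2)^n).
  { rewrite Pic_diff by (apply it_cont || apply zlim_cont). rewrite Rabs_Ropp.
    pose proof (cl_in L y ltac:(lra)) as hc. unfold inI in hc.
    eapply Rle_trans; [apply abs_RInt_le_const; [lra| |]|].
    - apply (@ex_RInt_continuous R_CompleteNormedModule). intros z _.
      apply (continuous_minus (fun s => G s (it n s)) (fun s => G s (zlim s))); apply hGc; [apply it_cont|apply zlim_cont].
    - intros t _. eapply Rle_trans; [apply hLip|].
      apply Rmult_le_compat_l; [lra|]. rewrite Rabs_minus_sym. apply zlim_unif.
    - pose proof B0_nonneg. pose proof (half_pow_pos n).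
      assert (0 <= K * (B0 * (/2)^n)) by (apply Rmult_le_pos; nra).
      assert ((L - cl L y) * (K * (B0 * (/ 2) ^ n)) <= L * (K * (B0 * (/ 2) ^ n))) by nra.
      nra. }
  change (it (S n) y) with (Pic (it n) y) in h1.
  replace (zlim y - Pic zlim y) with ((zlim y - Pic (it n) y) + (Pic (it n) y - Pic zlim y)) by ring.
  eapply Rle_trans; [apply Rabs_triang|]. lra.
Qed.

End Picard.

Lemma picard_exists (L zL M K : R) (G : R -> R -> R) :
  0 < L -> 0 < K ->
  (forall t w, Rabs (G t w) <= M) ->
  (forall t w1 w2, Rabs (G t w1 - G t w2) <= K * Rabs (w1 - w2)) ->
  (forall x : R -> R, (forall t, continuous x t) -> forall t, continuous (fun s => G s (x s)) t) ->
  exists z : R -> R, (forall t, continuous z t) /\ z L = zL /\ 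
    (forall y, 0 < y < L -> is_derive z y (G y (z y))).
Proof.
  intros hL hK hM hLip hGc.
  exists (zlim L zL G). split; [|split].
  - eapply zlim_cont; eauto.
  - rewrite (zlim_fix L zL M K G) by auto. unfold Pic. rewrite cl_id by (unfold inI; lra).
    rewrite RInt_point. unfold zero; simpl. ring.
  - intros y hy.
    apply is_derive_ext with (Pic L zL G (zlim L zL G)).
    { intros t. symmetry. apply (zlim_fix L zL M K G); auto. }
    assert (hc : forall t, continuous (fun s => G s (zlim L zL G s)) t) by (apply hGc; eapply zlim_cont; eauto).
    apply is_derive_ext_loc with (fun b => zL + RInt (fun s => G s (zlim L zL G s)) L b).
    + assert (h : 0 < Rmin (y - 0) (L - y)) by (apply Rmin_glb_lt; lra).
      exists (mkposreal _ h). intros t ht. simpl in ht. rewrite ball_R in ht.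
      unfold Pic. rewrite (cl_id L t); [reflexivity|]. unfold inI.
      assert (Rmin (y-0) (L-y) <= y - 0) by apply Rmin_l.
      assert (Rmin (y-0) (L-y) <= L - y) by apply Rmin_r.
      unfold Rabs in ht; destruct Rcase_abs in ht; lra.
    + replace (G y (zlim L zL G y)) with (0 + G y (zlim L zL G y)) by ring.
      apply (is_derive_plus (fun _ => zL) (fun b => RInt (fun s => G s (zlim L zL G s)) L b)).
      * apply (@is_derive_const R_AbsRing R_NormedModule).
      * apply (RInt_cont_upper (fun s => G s (zlim L zL G s)) L hc y).
Qed.


Lemma cpt_div f g x : continuity_pt f x -> continuity_pt g x -> g x <> 0 ->
  continuity_pt (fun t => f t / g t) x.
Proof. intros; now apply (continuity_pt_div f g x). Qed.

Lemma cont_to_cpt f x : continuous f x -> continuity_pt f x.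
Proof. intros; now apply continuity_pt_filterlim. Qed.

Lemma cont_within_of f L y : continuous f y -> cont_within_I L f y.
Proof.
  intros H. unfold cont_within_I. eapply filterlim_filter_le_1; [|exact H].
  apply filter_le_within.
Qed.

Lemma F_lip (a Am T Tm B c0 zL d0 w1 w2 : R) :
  0 <= a <= Am -> T <= Tm -> 0 <= B -> 0 <= c0 -> 0 < d0 ->
  0 <= w1 <= zL -> 0 <= w2 <= zL -> d0 <= T - c0 * w1 -> d0 <= T - c0 * w2 ->
  Rabs (2 * w1 * (a + B * w1) / (T - c0 * w1) - 2 * w2 * (a + B * w2) / (T - c0 * w2))
  <= 2 * (Tm * (Am + 2 * B * zL) + c0 * B * zL ^ 2) / d0 ^ 2 * Rabs (w1 - w2).
Proof.
  intros ha hT hB hc hd h1 h2 hd1 hd2.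
  assert (hT0 : 0 <= T) by nra.
  set (br := T * (a + B * (w1 + w2)) - c0 * B * w1 * w2).
  assert (E : 2 * w1 * (a + B * w1) / (T - c0 * w1) - 2 * w2 * (a + B * w2) / (T - c0 * w2)
              = 2 * (w1 - w2) * br * / ((T - c0 * w1) * (T - c0 * w2))).
  { unfold br. field. split; lra. }
  rewrite E. rewrite !Rabs_mult, Rabs_inv.
  rewrite (Rabs_right 2) by lra.
  rewrite (Rabs_right ((T - c0 * w1) * (T - c0 * w2))) by nra.
  set (N0 := Tm * (Am + 2 * B * zL) + c0 * B * zL ^ 2).
  assert (hS : 0 <= a + B * (w1 + w2) <= Am + 2 * B * zL).
  { split; [|assert (B * (w1 + w2) <= B * (2 * zL)) by (apply Rmult_le_compat_l; lra)]; nra. }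
  assert (hP1 : 0 <= T * (a + B * (w1 + w2))) by (apply Rmult_le_pos; lra).
  assert (hP2 : T * (a + B * (w1 + w2)) <= Tm * (Am + 2 * B * zL)).
  { apply Rmult_le_compat; lra. }
  assert (hcB : 0 <= c0 * B) by (apply Rmult_le_pos; lra).
  assert (hww : 0 <= w1 * w2 <= zL ^ 2) by (simpl; split; [apply Rmult_le_pos|apply Rmult_le_compat]; lra).
  assert (hQ : 0 <= c0 * B * (w1 * w2) <= c0 * B * zL ^ 2).
  { split; [apply Rmult_le_pos|apply Rmult_le_compat_l]; lra. }
  assert (hbr : Rabs br <= N0).
  { unfold br, N0. apply Rabs_le.
    replace (c0 * B * w1 * w2) with (c0 * B * (w1 * w2)) by ring. lra. }
  assert (hinv : / ((T - c0 * w1) * (T - c0 * w2)) <= / d0 ^ 2).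
  { apply Rinv_le_contravar; [simpl; nra|]. simpl. nra. }
  assert (0 <= / ((T - c0 * w1) * (T - c0 * w2))) by (apply Rlt_le, Rinv_0_lt_compat; nra).
  pose proof (Rabs_pos (w1 - w2)). pose proof (Rabs_pos br).
  assert (0 <= N0) by (pose proof (Rabs_pos br); lra).
  replace (2 * N0 / d0 ^ 2 * Rabs (w1 - w2)) with (2 * Rabs (w1 - w2) * N0 * / d0 ^ 2) by (field; lra).
  apply Rmult_le_compat; try nra.
Qed.

Lemma F_bnd (a Am T B c0 zL d0 w : R) :
  0 <= a <= Am -> 0 <= B -> 0 < d0 -> 0 <= w <= zL -> d0 <= T - c0 * w ->
  Rabs (2 * w * (a + B * w) / (T - c0 * w)) <= 2 * zL * (Am + B * zL) / d0.
Proof.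
  intros ha hB hd hw hdw.
  rewrite Rabs_div by lra. rewrite (Rabs_right (T - c0 * w)) by lra.
  rewrite Rabs_right by nra.
  unfold Rdiv. apply Rmult_le_compat.
  - nra.
  - apply Rlt_le, Rinv_0_lt_compat; lra.
  - assert (0 <= a + B * w <= Am + B * zL) by nra. nra.
  - apply Rinv_le_contravar; lra.
Qed.

Lemma eq_at_0 L f g : 0 < L -> continuity_pt (fun t => f (cl L t)) 0 ->
  continuity_pt (fun t => g (cl L t)) 0 -> (forall y, 0 < y <= L -> f y = g y) -> f 0 = g 0.
Proof.
  intros hL cf cg H.
  apply Rminus_diag_uniq. destruct (Req_dec (f 0 - g 0) 0) as [e|ne]; [exact e|exfalso].
  set (eps := Rabs (f 0 - g 0) / 2).
  assert (he : 0 < eps) by (unfold eps; pose proof (Rabs_pos_lt _ ne); lra).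
  destruct (cont_eps _ 0 cf eps he) as [d1 [hd1 H1]].
  destruct (cont_eps _ 0 cg eps he) as [d2 [hd2 H2]].
  set (t := Rmin (Rmin d1 d2) L / 2).
  assert (hm : 0 < Rmin (Rmin d1 d2) L) by (repeat apply Rmin_glb_lt; lra).
  assert (Rmin (Rmin d1 d2) L <= Rmin d1 d2) by apply Rmin_l.
  assert (Rmin (Rmin d1 d2) L <= L) by apply Rmin_r.
  assert (Rmin d1 d2 <= d1) by apply Rmin_l.
  assert (Rmin d1 d2 <= d2) by apply Rmin_r.
  assert (ht : 0 < t <= L) by (unfold t; lra).
  assert (ht' : Rabs (t - 0) < d1 /\ Rabs (t - 0) < d2) by (rewrite Rminus_0_r, Rabs_right by lra; unfold t; lra).
  specialize (H1 t (proj1 ht')). specialize (H2 t (proj2 ht')).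
  rewrite !cl_id in H1 by (unfold inI; lra). rewrite !cl_id in H2 by (unfold inI; lra).
  rewrite (H t ht) in H1.
  assert (Rabs (f 0 - g 0) <= Rabs (g t - f 0) + Rabs (g t - g 0)).
  { replace (f 0 - g 0) with (- (g t - f 0) + (g t - g 0)) by ring.
    eapply Rle_trans; [apply Rabs_triang|]. rewrite Rabs_Ropp. lra. }
  unfold eps in *. lra.
Qed.

Section Main.
Variables (L phi kf ks hv cpf mc Ac Rg muf KD KF pHG Tb qHG : R)
  (Tf Ts dTf dTs ddTf ddTs : R -> R).
Hypotheses (hL : 0 < L) (hphi : 0 < phi < 1)
  (hkf : 0 < kf) (hks : 0 < ks) (hhv : 0 < hv) (hcpf : 0 < cpf)
  (hmc : 0 < mc) (hAc : 0 < Ac) (hRg : 0 < Rg) (hmuf : 0 < muf)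
  (hKD : 0 < KD) (hKF : 0 < KF) (hpHG : 0 < pHG) (hTb : 0 < Tb)
  (hT : temp_solution L phi kf ks hv cpf mc Ac Tb qHG Tf Ts dTf dTs ddTf ddTs)
  (hq : 0 < qHG)
  (hsub : pHG / (Rg * Tf L) > mc / (phi * Ac) * (1 / sqrt (Rg * Tb))).

Let c0 := / phi ^ 2 * (mc / Ac) ^ 2.
Let Aco := Rg * / (cpf * mc) * hv * Ac.
Let Bc := mc / Ac * (muf / KD + mc / (KF * Ac)).
Let rL := pHG / (Rg * Tf L).
Let zL := / rL ^ 2.
Let Dd t := Ts t - Tf t.
Let F t w := 2 * w * (Aco * Dd t + Bc * w) / (Rg * Tf t - c0 * w).
Let Gf t w := F (cl L t) (cl zL w).

Lemma tf y : inI L y -> 0 <= Dd y /\ Tb <= Tf y.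
Proof. intros; unfold Dd; apply (temp_facts L phi kf ks hv cpf mc Ac Tb qHG Tf Ts dTf dTs ddTf ddTs); auto. Qed.

Lemma c0_pos : 0 < c0.
Proof.
  unfold c0. apply Rmult_lt_0_compat.
  - apply Rinv_0_lt_compat, pow_lt; lra.
  - apply pow_lt, Rdiv_lt_0_compat; lra.
Qed.
Lemma Aco_pos : 0 < Aco.
Proof.
  unfold Aco. repeat apply Rmult_lt_0_compat; try lra.
  apply Rinv_0_lt_compat; nra.
Qed.
Lemma Bc_pos : 0 < Bc.
Proof.
  unfold Bc. apply Rmult_lt_0_compat; [apply Rdiv_lt_0_compat; lra|].
  apply Rplus_lt_0_compat; apply Rdiv_lt_0_compat; nra.
Qed.
Lemma TfL : Tb <= Tf L.
Proof. apply tf. unfold inI; lra. Qed.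
Lemma rL_pos : 0 < rL.
Proof. unfold rL. pose proof TfL. apply Rdiv_lt_0_compat; nra. Qed.
Lemma zL_pos : 0 < zL.
Proof. unfold zL. apply Rinv_0_lt_compat, pow_lt, rL_pos. Qed.

Lemma key : c0 < Rg * Tb * rL ^ 2.
Proof.
  pose proof hsub as hs0. fold rL in hs0.
  set (s := sqrt (Rg * Tb)) in *.
  assert (hs : 0 < s) by (apply sqrt_lt_R0; nra).
  assert (hs2 : s * s = Rg * Tb) by (apply sqrt_sqrt; nra).
  set (a := mc / (phi * Ac)) in *.
  assert (ha : 0 < a) by (apply Rdiv_lt_0_compat; nra).
  assert (hc : c0 = a ^ 2) by (unfold c0, a; field; lra).
  assert (h1 : a / s < rL) by (unfold Rdiv; replace (a * / s) with (a * (1 / s)) by (field; lra); lra).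
  assert (h2 : a < rL * s).
  { apply (Rmult_lt_compat_r s) in h1; [|lra]. unfold Rdiv in h1.
    rewrite Rmult_assoc, Rinv_l in h1 by lra. lra. }
  rewrite hc, <- hs2. simpl. nra.
Qed.

Let d0 := Rg * Tb - c0 * zL.

Lemma d0_pos : 0 < d0.
Proof.
  unfold d0, zL. pose proof key. pose proof rL_pos.
  assert (c0 * / rL ^ 2 < Rg * Tb); [|lra].
  apply (Rmult_lt_reg_r (rL ^ 2)); [apply pow_lt; lra|].
  rewrite Rmult_assoc, Rinv_l by (apply pow_nonzero; lra). lra.
Qed.

Lemma den_ge t w : inI L t -> 0 <= w <= zL -> d0 <= Rg * Tf t - c0 * w.
Proof.
  intros ht hw. destruct (tf t ht) as [_ h]. pose proof c0_pos. unfold d0.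
  assert (c0 * w <= c0 * zL) by (apply Rmult_le_compat_l; lra). nra.
Qed.

Lemma cTf' x : continuity_pt (fun t => Tf (cl L t)) x.
Proof. apply (cTf L phi kf ks hv cpf mc Ac Tb qHG Tf Ts dTf dTs ddTf ddTs); auto. Qed.
Lemma cTs' x : continuity_pt (fun t => Ts (cl L t)) x.
Proof. apply (cTs L phi kf ks hv cpf mc Ac Tb qHG Tf Ts dTf dTs ddTf ddTs); auto. Qed.
Lemma cDd x : continuity_pt (fun t => Dd (cl L t)) x.
Proof. apply cpt_minus; [apply cTs'|apply cTf']. Qed.

Lemma Dmax : exists Dm, forall t, inI L t -> Dd t <= Dm.
Proof.
  destruct (continuity_ab_maj (fun t => Dd (cl L t)) 0 L ltac:(lra) (fun c _ => cDd c)) as [m [Hm _]].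
  exists (Dd (cl L m)). intros t ht. specialize (Hm t ht). rewrite cl_id in Hm by exact ht. exact Hm.
Qed.
Lemma Tmax : exists Tm, forall t, inI L t -> Tf t <= Tm.
Proof.
  destruct (continuity_ab_maj (fun t => Tf (cl L t)) 0 L ltac:(lra) (fun c _ => cTf' c)) as [m [Hm _]].
  exists (Tf (cl L m)). intros t ht. specialize (Hm t ht). rewrite cl_id in Hm by exact ht. exact Hm.
Qed.


Lemma Gf_props : exists M K, 0 < K /\ (forall t w, Rabs (Gf t w) <= M) /\
  (forall t w1 w2, Rabs (Gf t w1 - Gf t w2) <= K * Rabs (w1 - w2)).
Proof.
  destruct Dmax as [Dm HDm]. destruct Tmax as [Tm HTm].
  assert (hDm : 0 <= Dm) by (assert (h0 : inI L 0) by (unfold inI; lra); pose proof (HDm 0 h0); pose proof (tf 0 h0); lra).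
  assert (hTm : 0 <= Tm) by (assert (h0 : inI L 0) by (unfold inI; lra); pose proof (HTm 0 h0); pose proof (tf 0 h0); lra).
  pose proof Aco_pos. pose proof Bc_pos. pose proof c0_pos. pose proof d0_pos. pose proof zL_pos.
  set (Am := Aco * Dm).
  set (K0 := 2 * (Rg * Tm * (Am + 2 * Bc * zL) + c0 * Bc * zL ^ 2) / d0 ^ 2).
  assert (hK0 : 0 <= K0).
  { unfold K0. apply Rmult_le_pos; [|apply Rlt_le, Rinv_0_lt_compat, pow_lt; lra].
    assert (0 <= Am) by (unfold Am; nra).
    assert (0 <= Rg * Tm) by nra.
    assert (0 <= Rg * Tm * (Am + 2 * Bc * zL)) by (apply Rmult_le_pos; nra).
    assert (0 <= c0 * Bc * zL ^ 2) by (apply Rmult_le_pos; [nra|apply pow_le; lra]). lra. }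
  assert (ha : forall t, 0 <= Aco * Dd (cl L t) <= Am).
  { intros t. pose proof (cl_in L t ltac:(lra)) as ht. destruct (tf _ ht) as [h1 _].
    specialize (HDm _ ht). unfold Am; split; [nra|]. apply Rmult_le_compat_l; lra. }
  assert (hw : forall w, 0 <= cl zL w <= zL) by (intros; apply cl_in; lra).
  assert (hden : forall t w, d0 <= Rg * Tf (cl L t) - c0 * cl zL w).
  { intros; apply den_ge; [apply cl_in; lra| apply hw]. }
  exists (2 * zL * (Am + Bc * zL) / d0), (K0 + 1). split; [lra|split].
  - intros t w. unfold Gf, F. apply F_bnd; auto; lra.
  - intros t w1 w2. unfold Gf, F.
    eapply Rle_trans.
    { apply (F_lip _ Am _ (Rg * Tm)); auto; try lra.
      pose proof (cl_in L t ltac:(lra)) as ht. specialize (HTm _ ht). nra. }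
    fold K0. pose proof (cl_lip zL w1 w2 ltac:(lra)). pose proof (Rabs_pos (w1 - w2)).
    pose proof (Rabs_pos (cl zL w1 - cl zL w2)).
    apply Rle_trans with (K0 * Rabs (w1 - w2)); [apply Rmult_le_compat_l; lra| nra].
Qed.

Lemma Gf_cont (x : R -> R) : (forall t, continuous x t) -> forall t, continuous (fun s => Gf s (x s)) t.
Proof.
  intros hx t. apply continuity_pt_filterlim.
  pose proof zL_pos. pose proof d0_pos.
  assert (cw : continuity_pt (fun s => cl zL (x s)) t).
  { apply (cpt_comp x (cl zL)); [apply cont_to_cpt, hx| apply cl_cont; lra]. }
  unfold Gf, F. apply cpt_div.
  - apply cpt_mult; [apply cpt_mult; [apply cpt_const| exact cw]|].
    apply cpt_plus; [apply cpt_mult; [apply cpt_const| apply cDd]| apply cpt_mult; [apply cpt_const| exact cw]].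
  - apply cpt_minus; [apply cpt_mult; [apply cpt_const| apply cTf']| apply cpt_mult; [apply cpt_const| exact cw]].
  - assert (d0 <= Rg * Tf (cl L t) - c0 * cl zL (x t)); [|lra].
    apply den_ge; apply cl_in; lra.
Qed.

Lemma z_exists : exists z : R -> R, (forall t, continuous z t) /\ z L = zL /\
    (forall y, 0 < y < L -> is_derive z y (Gf y (z y))).
Proof.
  destruct Gf_props as [M [K [hK [hM hLip]]]].
  apply (picard_exists L zL M K Gf hL hK hM hLip Gf_cont).
Qed.


Lemma Gf_nonneg t w : 0 <= Gf t w.
Proof.
  unfold Gf, F. pose proof zL_pos. pose proof d0_pos. pose proof Aco_pos. pose proof Bc_pos.
  pose proof (cl_in zL w ltac:(lra)) as hw. pose proof (cl_in L t ltac:(lra)) as ht.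
  destruct (tf _ ht) as [h1 _]. unfold inI in hw.
  pose proof (den_ge (cl L t) (cl zL w) ht hw).
  apply Rmult_le_pos; [|apply Rlt_le, Rinv_0_lt_compat; lra].
  apply Rmult_le_pos; [lra|]. apply Rplus_le_le_0_compat; apply Rmult_le_pos; lra.
Qed.

Lemma Gf_pos t w : 0 < cl zL w -> 0 < Gf t w.
Proof.
  intros hw0. unfold Gf, F. pose proof zL_pos. pose proof d0_pos. pose proof Aco_pos. pose proof Bc_pos.
  pose proof (cl_in zL w ltac:(lra)) as hw. pose proof (cl_in L t ltac:(lra)) as ht.
  destruct (tf _ ht) as [h1 _]. unfold inI in hw.
  pose proof (den_ge (cl L t) (cl zL w) ht hw).
  apply Rmult_lt_0_compat; [|apply Rinv_0_lt_compat; lra].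
  apply Rmult_lt_0_compat; [lra|].
  assert (0 <= Aco * Dd (cl L t)) by (apply Rmult_le_pos; lra).
  assert (0 < Bc * cl zL w) by (apply Rmult_lt_0_compat; lra). lra.
Qed.

Lemma Gf_zero t : Gf t 0 = 0.
Proof.
  unfold Gf, F. rewrite (cl_id zL 0) by (pose proof zL_pos; unfold inI; lra).
  unfold Rdiv. ring.
Qed.

Lemma ext_cont (z : R -> R) : (forall t, continuous z t) -> forall x, continuity_pt (fun t => z (cl L t)) x.
Proof.
  intros hz x. apply (cpt_comp (cl L) z); [apply cl_cont; lra| apply cont_to_cpt, hz].
Qed.

Section Zprops.
Variables (z : R -> R) (K : R).
Hypotheses (hzc : forall t, continuous z t) (hzL : z L = zL)
  (hzd : forall y, 0 < y < L -> is_derive z y (Gf y (z y)))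
  (hK : 0 < K) (hLip : forall t w1 w2, Rabs (Gf t w1 - Gf t w2) <= K * Rabs (w1 - w2)).

Lemma z_le y : inI L y -> z y <= zL.
Proof.
  intros hy. rewrite <- hzL. unfold inI in hy.
  apply (mono_E L z (fun t => Gf t (z t)) y L); try lra.
  - intros; apply hzd; lra.
  - intros; apply Gf_nonneg.
  - intros; apply ext_cont; auto.
Qed.

Lemma z_pos y : inI L y -> 0 < z y.
Proof.
  intros hy. destruct (Rlt_le_dec 0 (z y)) as [h|h]; [exact h|exfalso].
  pose proof zL_pos. unfold inI in hy.
  destruct (last_zero (fun t => - z (cl L t)) y L ltac:(lra)) as [s [hs [zs Hneg]]].
  { intros; apply cpt_opp, ext_cont; auto. }
  { rewrite cl_id by (unfold inI; lra). lra. }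
  { rewrite cl_id by (unfold inI; lra). lra. }
  rewrite cl_id in zs by (unfold inI; lra).
  assert (zp : forall t, s < t <= L -> 0 < z t).
  { intros t ht. specialize (Hneg t ht). rewrite cl_id in Hneg by (unfold inI; lra). lra. }
  assert (Hphi : z L * exp (- K * L) <= z s * exp (- K * s)).
  { apply (antimono_E L (fun t => z t * exp (- K * t))
      (fun t => Gf t (z t) * exp (- K * t) + z t * (- K * exp (- K * t))) s L); try lra.
    - intros x hx. apply (isd_mult z (fun t => exp (- K * t))); [apply hzd; lra| apply isd_expk].
    - intros x hx. pose proof (exp_pos (- K * x)).
      assert (Gf x (z x) <= K * z x).
      { pose proof (hLip x (z x) 0). rewrite Gf_zero, Rminus_0_r, Rminus_0_r in H1.
        rewrite Rabs_right in H1 by (apply Rle_ge, Gf_nonneg).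
        rewrite Rabs_right in H1 by (apply Rle_ge, Rlt_le, zp; lra). exact H1. }
      nra.
    - intros x _. apply cpt_mult; [apply ext_cont; auto|].
      apply (cpt_comp (fun t => - K * cl L t) exp); [|apply cpt_exp].
      apply cpt_mult; [apply cpt_const| apply cl_cont; lra]. }
  assert (zs0 : z s = 0) by lra. rewrite zs0, hzL in Hphi. pose proof (exp_pos (- K * L)). nra.
Qed.

Lemma z_incr x y : inI L x -> inI L y -> x < y -> z x < z y.
Proof.
  intros hx hy hxy. unfold inI in *.
  apply (smono_E L z (fun t => Gf t (z t)) x y); try lra.
  - intros; apply hzd; lra.
  - intros t ht. apply Gf_pos. rewrite cl_id; [apply z_pos; unfold inI; lra|].
    split; [apply Rlt_le, z_pos; unfold inI; lra| apply z_le; unfold inI; lra].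
  - intros; apply ext_cont; auto.
Qed.


Lemma isqrt_der w : 0 < w -> is_derive (fun w => / sqrt w) w (- / (2 * w * sqrt w)).
Proof.
  intros hw. assert (hs : 0 < sqrt w) by (apply sqrt_lt_R0; lra).
  assert (hss : sqrt w * sqrt w = w) by (apply sqrt_sqrt; lra).
  auto_derive.
  - repeat split; lra.
  - rewrite hss. field. lra.
Qed.

Definition rho_of (y : R) : R := / sqrt (z y).

Lemma rho_cont y : inI L y -> continuous rho_of y.
Proof.
  intros hy. apply continuity_pt_filterlim. unfold rho_of.
  pose proof (z_pos y hy) as hz.
  apply (cpt_comp z (fun w => / sqrt w)); [apply cont_to_cpt, hzc|].
  apply (continuity_pt_inv sqrt); [apply continuity_pt_sqrt; lra|].
  apply Rgt_not_eq, sqrt_lt_R0; lra.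
Qed.

Lemma rho_sol : density_solution L Rg phi hv cpf mc Ac muf KD KF pHG Tf Ts rho_of.
Proof.
  split; [|split].
  - intros y hy. apply cont_within_of, rho_cont, hy.
  - intros y hy.
    assert (hyI : inI L y) by (unfold inI; lra).
    pose proof (z_pos y hyI) as hz. pose proof (z_le y hyI) as hzl.
    set (w := z y) in *.
    set (s := sqrt w).
    assert (hs : 0 < s) by (apply sqrt_lt_R0; lra).
    assert (hss : s * s = w) by (apply sqrt_sqrt; lra).
    pose proof (den_ge y w hyI ltac:(lra)) as hden. pose proof d0_pos.
    assert (GF : Gf y w = F y w) by (unfold Gf; rewrite (cl_id L y), (cl_id zL w) by (unfold inI; lra); reflexivity).
    assert (hD : Nden Rg phi mc Ac Tf y (rho_of y) = (c0 * w - Rg * Tf y) / w).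
    { unfold Nden, rho_of. fold w. fold s. fold c0. rewrite <- hss. field. lra. }
    split.
    + rewrite hD. apply Rlt_not_eq. unfold Rdiv. apply Rmult_neg_pos; [lra| apply Rinv_0_lt_compat; lra].
    + pose proof (is_derive_comp (fun w => / sqrt w) z y _ _ (isqrt_der w hz) (hzd y hy)) as Hcomp.
      assert (Eq : Nbar Rg phi hv cpf mc Ac muf KD KF Tf Ts y (rho_of y) * rho_of y
                   = Gf y w * (- / (2 * w * sqrt w))).
      { unfold Nbar. rewrite hD. unfold Nnum. unfold rho_of. fold w. fold s. fold Aco. fold Bc.
        rewrite GF. unfold F. fold (Dd y).
        assert (Rg * Tf y - c0 * (s * s) > 0) by (rewrite hss; lra).
        rewrite <- hss. field. repeat split; lra. }
      rewrite Eq. exact Hcomp.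
  - unfold rho_of. rewrite hzL. unfold zL. rewrite sqrt_inv, sqrt_pow2 by (apply Rlt_le, rL_pos).
    rewrite Rinv_inv. reflexivity.
Qed.

Lemma rho_pos y : inI L y -> 0 < rho_of y.
Proof. intros hy. unfold rho_of. apply Rinv_0_lt_compat, sqrt_lt_R0, z_pos, hy. Qed.

Lemma rho_decr x y : inI L x -> inI L y -> x < y -> rho_of y < rho_of x.
Proof.
  intros hx hy hxy. unfold rho_of.
  pose proof (z_pos x hx). pose proof (z_pos y hy). pose proof (z_incr x y hx hy hxy).
  apply Rinv_lt_contravar.
  - apply Rmult_lt_0_compat; apply sqrt_lt_R0; lra.
  - apply sqrt_lt_1; lra.
Qed.


Lemma uniq (rho2 : R -> R) : density_solution L Rg phi hv cpf mc Ac muf KD KF pHG Tf Ts rho2 ->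
  forall y, inI L y -> rho2 y = rho_of y.
Proof.
  intros [hc2 [hd2 hL2]].
  pose proof c0_pos as hc0. pose proof zL_pos as hzL0. pose proof rL_pos as hrL. pose proof d0_pos as hd0.
  assert (c2 : forall x, continuity_pt (fun t => rho2 (cl L t)) x) by (apply cont_ext_pt; [lra|exact hc2]).
  assert (cN : forall x, continuity_pt (fun t => Nden Rg phi mc Ac Tf (cl L t) (rho2 (cl L t))) x).
  { intros x. unfold Nden. apply cpt_minus; [apply cpt_const|].
    apply cpt_mult; [apply cpt_mult; [apply cpt_const|apply cTf']|].
    apply (cpt_comp (fun t => rho2 (cl L t)) (fun u => u ^ 2)); [apply c2|].
    apply derivable_continuous_pt, derivable_pt_pow. }
  assert (NL : Nden Rg phi mc Ac Tf L (rho2 L) < 0).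
  { unfold Nden. fold c0. rewrite hL2. fold rL. pose proof key. pose proof TfL.
    assert (Rg * Tb * rL ^ 2 <= Rg * Tf L * rL ^ 2); [|lra].
    apply Rmult_le_compat_r; [apply pow_le; lra| nra]. }
  assert (hneg : forall y, 0 < y <= L -> Nden Rg phi mc Ac Tf y (rho2 y) < 0).
  { intros y hy. destruct (Req_dec y L) as [->|ne]; [exact NL|].
    destruct (Rlt_le_dec (Nden Rg phi mc Ac Tf y (rho2 y)) 0) as [h|h]; [exact h|exfalso].
    destruct (last_zero (fun t => Nden Rg phi mc Ac Tf (cl L t) (rho2 (cl L t))) y L ltac:(lra)) as [s [hs [Ns _]]].
    { intros; apply cN. }
    { rewrite cl_id by (unfold inI; lra). exact h. }
    { rewrite cl_id by (unfold inI; lra). exact NL. }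
    rewrite cl_id in Ns by (unfold inI; lra).
    destruct (hd2 s ltac:(lra)) as [hh _]. contradiction. }
  assert (hnz : forall y, 0 < y <= L -> rho2 y <> 0).
  { intros y hy e. specialize (hneg y hy). unfold Nden in hneg. fold c0 in hneg. rewrite e in hneg.
    simpl in hneg. lra. }
  assert (hpos : forall y, 0 < y <= L -> 0 < rho2 y).
  { intros y hy. destruct (Rlt_le_dec 0 (rho2 y)) as [h|h]; [exact h|exfalso].
    destruct (last_zero (fun t => - rho2 (cl L t)) y L ltac:(lra)) as [s [hs [rs _]]].
    { intros; apply cpt_opp, c2. }
    { rewrite cl_id by (unfold inI; lra). lra. }
    { rewrite cl_id by (unfold inI; lra). rewrite hL2. fold rL. lra. }
    rewrite cl_id in rs by (unfold inI; lra).
    apply (hnz s ltac:(lra)). lra. }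
  set (z2 := fun t => / rho2 t ^ 2).
  assert (hz2pos : forall t, 0 < t <= L -> 0 < z2 t).
  { intros t ht. unfold z2. apply Rinv_0_lt_compat, pow_lt, hpos, ht. }
  assert (hz2den : forall t, 0 < t <= L -> 0 < Rg * Tf t - c0 * z2 t).
  { intros t ht. specialize (hneg t ht). pose proof (hpos t ht). unfold Nden in hneg. fold c0 in hneg.
    unfold z2. assert (Rg * Tf t - c0 * / rho2 t ^ 2 = (Rg * Tf t * rho2 t ^ 2 - c0) / rho2 t ^ 2) by (field; lra).
    rewrite H0. apply Rdiv_lt_0_compat; [lra| apply pow_lt; lra]. }
  assert (hz2d : forall t, 0 < t < L -> is_derive z2 t (F t (z2 t))).
  { intros t ht. destruct (hd2 t ht) as [hN hd].
    assert (hr : 0 < rho2 t) by (apply hpos; lra).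
    assert (hinv : is_derive (fun r => / r ^ 2) (rho2 t) (- 2 / rho2 t ^ 3)).
    { auto_derive; [nra|]. field. lra. }
    pose proof (is_derive_comp (fun r => / r ^ 2) rho2 t _ _ hinv hd) as Hc.
    assert (Eq : F t (z2 t) = scal (Nbar Rg phi hv cpf mc Ac muf KD KF Tf Ts t (rho2 t) * rho2 t) (- 2 / rho2 t ^ 3)).
    { specialize (hz2den t ltac:(lra)). unfold z2 in hz2den |- *. unfold F. unfold Nbar, Nnum. unfold Nden in hN |- *. fold c0 in hN |- *. fold Aco. fold Bc.
      fold (Dd t). unfold scal; simpl; unfold mult; simpl.
      assert (e1 : c0 - Rg * Tf t * rho2 t ^ 2 <> 0) by exact hN.
      field. repeat split; try lra. }
    rewrite Eq. exact Hc. }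
  assert (cz2 : forall x, 0 < x <= L -> continuity_pt (fun t => z2 (cl L t)) x).
  { intros x hx. unfold z2.
    apply (cpt_comp (fun t => rho2 (cl L t)) (fun r => / r ^ 2)); [apply c2|].
    apply (continuity_pt_inv (fun r => r ^ 2)); [apply derivable_continuous_pt, derivable_pt_pow|].
    rewrite cl_id by (unfold inI; lra). apply pow_nonzero, hnz, hx. }
  assert (hz2L : z2 L = zL) by (unfold z2, zL; rewrite hL2; reflexivity).
  assert (hz2le : forall t, 0 < t <= L -> z2 t <= zL).
  { intros t ht. rewrite <- hz2L.
    apply (mono_E L z2 (fun u => F u (z2 u)) t L); try lra.
    - intros; apply hz2d; lra.
    - intros u hu. unfold F. specialize (hz2pos u ltac:(lra)). specialize (hz2den u ltac:(lra)).
      pose proof (tf u ltac:(unfold inI; lra)) as [hD _]. pose proof Aco_pos. pose proof Bc_pos.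
      apply Rmult_le_pos; [|apply Rlt_le, Rinv_0_lt_compat; lra].
      apply Rmult_le_pos; [lra|]. apply Rplus_le_le_0_compat; apply Rmult_le_pos; lra.
    - intros x hx; apply cz2; lra. }
  assert (hGz2 : forall t, 0 < t < L -> Gf t (z2 t) = F t (z2 t)).
  { intros t ht. unfold Gf. rewrite (cl_id L t) by (unfold inI; lra).
    rewrite (cl_id zL (z2 t)); [reflexivity|]. unfold inI. split; [apply Rlt_le, hz2pos; lra| apply hz2le; lra]. }
  assert (heq : forall y, 0 < y <= L -> z2 y = z y).
  { intros y hy. destruct (Req_dec y L) as [->|ne]; [rewrite hz2L, hzL; reflexivity|].
    set (q := fun t => z2 t - z t).
    assert (Hm : q y * q y * exp (2 * K * y) <= q L * q L * exp (2 * K * L)).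
    { apply (mono_E L (fun t => q t * q t * exp (2 * K * t))
        (fun t => ((Gf t (z2 t) - Gf t (z t)) * q t + q t * (Gf t (z2 t) - Gf t (z t))) * exp (2 * K * t)
                  + q t * q t * (2 * K * exp (2 * K * t))) y L); try lra.
      - intros x hx.
        assert (dq : is_derive q x (Gf x (z2 x) - Gf x (z x))).
        { apply isd_minus; [rewrite hGz2 by lra; apply hz2d; lra| apply hzd; lra]. }
        apply (isd_mult (fun t => q t * q t) (fun t => exp (2 * K * t))); [|apply isd_expk].
        apply isd_mult; exact dq.
      - intros x hx. pose proof (exp_pos (2 * K * x)).
        assert (Hl := hLip x (z2 x) (z x)).
        assert (- (K * (q x * q x)) <= (Gf x (z2 x) - Gf x (z x)) * q x).
        { assert (Rabs ((Gf x (z2 x) - Gf x (z x)) * q x) <= K * (q x * q x)).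
          { rewrite Rabs_mult.
            assert (e : q x * q x = Rabs (q x) * Rabs (q x)) by (rewrite <- Rabs_mult; symmetry; apply Rabs_right, Rle_ge, Rle_0_sqr).
            rewrite e, <- Rmult_assoc. apply Rmult_le_compat_r; [apply Rabs_pos| unfold q; exact Hl]. }
          apply Rabs_le_between in H0. lra. }
        assert (0 <= (2 * (Gf x (z2 x) - Gf x (z x)) * q x + 2 * K * (q x * q x))) by lra.
        replace (((Gf x (z2 x) - Gf x (z x)) * q x + q x * (Gf x (z2 x) - Gf x (z x))) * exp (2 * K * x) +
                 q x * q x * (2 * K * exp (2 * K * x)))
          with ((2 * (Gf x (z2 x) - Gf x (z x)) * q x + 2 * K * (q x * q x)) * exp (2 * K * x)) by ring.
        apply Rmult_le_pos; lra.
      - intros x hx. apply cpt_mult; [apply cpt_mult; apply cpt_minus; [apply cz2; lra|apply ext_cont; auto|apply cz2; lra|apply ext_cont; auto]|].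
        apply (cpt_comp (fun t => 2 * K * cl L t) exp); [|apply cpt_exp].
        apply cpt_mult; [apply cpt_const| apply cl_cont; lra]. }
    assert (qL : q L = 0) by (unfold q; rewrite hz2L, hzL; ring).
    rewrite qL in Hm. pose proof (exp_pos (2 * K * y)).
    assert (q y * q y <= 0).
    { replace (0 * 0 * exp (2 * K * L)) with 0 in Hm by ring.
      destruct (Rle_lt_dec (q y * q y) 0) as [hh|hh]; [exact hh|]. nra. }
    assert (q y = 0) by nra. unfold q in H1. lra. }
  assert (Hpos_eq : forall y, 0 < y <= L -> rho2 y = rho_of y).
  { intros y hy. unfold rho_of. rewrite <- (heq y hy). unfold z2.
    rewrite sqrt_inv, sqrt_pow2 by (apply Rlt_le, hpos, hy). rewrite Rinv_inv. reflexivity. }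
  intros y hy. destruct (Req_dec y 0) as [->|ne]; [|apply Hpos_eq; unfold inI in hy; lra].
  assert (h0I : inI L 0) by (unfold inI; lra).
  assert (ca : continuity_pt (fun t => rho2 (cl L t)) 0) by apply c2.
  assert (cb : continuity_pt (fun t => rho_of (cl L t)) 0).
  { apply cont_ext_pt; [lra|]. intros x hx. apply cont_within_of, rho_cont, hx. }
  apply (eq_at_0 L rho2 rho_of hL ca cb). intros; apply Hpos_eq; auto.
Qed.

End Zprops.

Lemma main_result : exists rho : R -> R,
    density_solution L Rg phi hv cpf mc Ac muf KD KF pHG Tf Ts rho /\
    (forall rho2 : R -> R,
       density_solution L Rg phi hv cpf mc Ac muf KD KF pHG Tf Ts rho2 ->
       forall y, inI L y -> rho2 y = rho y) /\
    (forall y, inI L y -> 0 < rho y) /\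
    (forall x y, inI L x -> inI L y -> x < y -> rho y < rho x).
Proof.
  destruct Gf_props as [M [K [hK [hM hLip]]]].
  destruct z_exists as [z [hzc [hzL hzd]]].
  exists (rho_of z). split; [|split; [|split]].
  - eapply rho_sol; eauto.
  - intros rho2 h2 y hy. eapply uniq; eauto.
  - intros y hy. eapply rho_pos; eauto.
  - intros x y hx hy hxy. eapply rho_decr; eauto.
Qed.

End Main.

Theorem proposition3
  (L phi kf ks hv cpf mc Ac Rg muf KD KF pHG Tb qHG : R)
  (Tf Ts dTf dTs ddTf ddTs : R -> R)
  (hL : 0 < L) (hphi : 0 < phi < 1)
  (hkf : 0 < kf) (hks : 0 < ks) (hhv : 0 < hv) (hcpf : 0 < cpf)
  (hmc : 0 < mc) (hAc : 0 < Ac) (hRg : 0 < Rg) (hmuf : 0 < muf)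
  (hKD : 0 < KD) (hKF : 0 < KF) (hpHG : 0 < pHG) (hTb : 0 < Tb)
  (hT : temp_solution L phi kf ks hv cpf mc Ac Tb qHG Tf Ts dTf dTs ddTf ddTs)
  (hq : 0 < qHG)
  (hsub : pHG / (Rg * Tf L) > mc / (phi * Ac) * (1 / sqrt (Rg * Tb))) :
  exists rho : R -> R,
    density_solution L Rg phi hv cpf mc Ac muf KD KF pHG Tf Ts rho /\
    (forall rho2 : R -> R,
       density_solution L Rg phi hv cpf mc Ac muf KD KF pHG Tf Ts rho2 ->
       forall y, inI L y -> rho2 y = rho y) /\
    (forall y, inI L y -> 0 < rho y) /\
    (forall x y, inI L x -> inI L y -> x < y -> rho y < rho x).
Proof.
  exact (main_result L phi kf ks hv cpf mc Ac Rg muf KD KF pHG Tb qHG Tf Ts dTf dTs ddTf ddTs hL hphi hkf hks hhv hcpf hmc hAc hRg hmuf hKD hKF hpHG hTb hT hq hsub).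
Qed.
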